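(* Let $P(x)=\sum_{j=0}^n a_jx^j$ be a real polynomial of degree $n$, and let $m\in\{0,1,\dots,n\}$ be such that $a_j\ge0$ for all $m\le j\le n$. For $r>0$ define \[ b(r):=\sum_{j=m}^n a_jr^{j-m},\qquad c(r):=\max_{1\le i\le m}\left(\frac{|a_{m-i}|}{b(r)}\right)^{1/i},\qquad \nu_r(P):=\max\{r,\,2c(r)\}. \] Then $P(x)>0$ for all $x>\nu_r(P)$. *)

(* Defs.v *)
From HB Require Import structures.
From mathcomp Require Import all_boot all_order all_algebra.
From mathcomp Require Import all_classical all_reals all_analysis.
Set Implicit Arguments. Unset Strict Implicit. Unset Printing Implicit Defensive.
Import Order.TTheory GRing.Theory Num.Theory.
Local Open Scope ring_scope.

(* n = degree of p, a_j = p`_j *)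
Definition bcoef (R : realType) (p : {poly R}) (m : nat) (r : R) : R :=
  \sum_(m <= j < (size p).-1.+1) p`_j * r ^+ (j - m).

(* c(r) = max_{1 <= i <= m} (|a_{m-i}| / b(r))^(1/i); empty max (m = 0) is 0 *)
Definition ccoef (R : realType) (p : {poly R}) (m : nat) (r : R) : R :=
  \big[Num.max/0]_(i < m)
     powR (`|p`_(m - i.+1)| / bcoef p m r) ((i.+1)%:R)^-1.

Definition nu_r (R : realType) (p : {poly R}) (m : nat) (r : R) : R :=
  Num.max r (2 * ccoef p m r).

(* Main.v *)
Require Import Defs.
From HB Require Import structures.
From mathcomp Require Import lra.
From mathcomp Require Import all_boot all_order all_algebra.
From mathcomp Require Import all_classical all_reals all_analysis.
Import Order.TTheory GRing.Theory Num.Theory.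
Local Open Scope ring_scope.

Lemma bigmax0_ge (R : realType) (I : eqType) (r : seq I) (F : I -> R) i :
  i \in r -> F i <= \big[Num.max/0]_(j <- r) F j.
Proof.
elim: r => [//|a r IH]; rewrite inE big_cons => /orP [/eqP ->|/IH H].
  by rewrite le_max lexx.
by rewrite le_max H orbT.
Qed.

Lemma bigmax0_ge0 (R : realType) (I : eqType) (r : seq I) (F : I -> R) :
  0 <= \big[Num.max/0]_(j <- r) F j.
Proof.
elim: r => [|a r IH]; first by rewrite big_nil.
by rewrite big_cons le_max IH orbT.
Qed.

Lemma geom_half (R : realType) (m : nat) :
  \sum_(j < m) (2^-1 : R) ^+ (m - j) + 2^-1 ^+ m = 1.
Proof.
elim: m => [|m IH]; first by rewrite big_ord0 add0r expr0.
rewrite big_ord_recr /= subSnn expr1.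
have -> : \sum_(i < m) (2^-1 : R) ^+ (m.+1 - (widen_ord (leqnSn m) i))
   = 2^-1 * \sum_(i < m) (2^-1 : R) ^+ (m - i).
  rewrite mulr_sumr; apply: eq_bigr => i _ /=.
  by rewrite subSn ?exprS // ltnW.
rewrite exprS -addrA [2^-1 + _]addrC addrA -mulrDr IH mulr1.
by rewrite {3}(splitr 1) mul1r.
Qed.

Theorem proposition1 (R : realType) (p : {poly R}) (m : nat) :
  p != 0 ->
  (m <= (size p).-1)%N ->
  (forall j : nat, (m <= j <= (size p).-1)%N -> 0 <= p`_j) ->
  forall r : R, 0 < r -> forall x : R, nu_r p m r < x -> 0 < p.[x].
Proof.
move=> p0 hm hpos r r0 x hx.
set n := (size p).-1 in hm hpos.
have hs : size p = n.+1 by rewrite /n prednK // size_poly_gt0.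
have lc : 0 < p`_n.
  rewrite lt_def hpos ?hm ?leqnn // andbT.
  by rewrite -lead_coefE lead_coef_eq0.
have [hrx hcx] : r < x /\ 2 * ccoef p m r < x.
  by move: hx; rewrite /nu_r gt_max => /andP[].
have x0 : 0 < x by apply: lt_trans hrx.
set b := bcoef p m r.
have b0 : 0 < b.
  rewrite /b /bcoef -/n big_nat_recr //=.
  apply: ltr_wpDl; last by apply: mulr_gt0 => //; apply: exprn_gt0.
  rewrite big_nat_cond; apply: sumr_ge0 => j /andP[/andP[hj1 hj2] _].
  by apply: mulr_ge0; [apply: hpos; rewrite hj1 ltnW | apply: exprn_ge0; apply: ltW].
set c := ccoef p m r.
have c0 : 0 <= c by apply: bigmax0_ge0.
rewrite horner_coef hs -(big_mkord xpredT (fun i => p`_i * x ^+ i)).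
rewrite (@big_cat_nat _ _ _ m 0 n.+1) //; last by apply: leq_trans hm _.
set L := \big[_/_]_(0 <= i < m) _.
set H := \big[_/_]_(m <= i < n.+1) _.
change (0 < L + H).
have hH : x ^+ m * b <= H.
  rewrite /b /bcoef -/n /H mulr_sumr.
  apply: ler_sum_nat => j /andP[hj1 hj2].
  have -> : x ^+ j = x ^+ m * x ^+ (j - m) by rewrite -exprD subnKC.
  rewrite [X in X <= _]mulrCA.
  apply: ler_wpM2l; first by apply: hpos; rewrite hj1 -ltnS.
  apply: ler_wpM2l; first by apply: exprn_ge0; apply: ltW.
  by apply: lerXn2r; rewrite ?nnegrE ltW.
have hterm : forall j, (j < m)%N -> - (p`_j * x ^+ j) <= b * x ^+ m * 2^-1 ^+ (m - j).
  move=> j hj.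
  have hk : (0 < m - j)%N by rewrite subn_gt0.
  have hjk : (m - j + j)%N = m by rewrite subnK // ltnW.
  set k := (m - j)%N in hk hjk *.
  have hi : (k.-1 < m)%N by rewrite prednK // /k leq_subr.
  have hmi : (m - (k.-1).+1)%N = j by rewrite prednK // /k subKn // ltnW.
  have hy : `|p`_j| <= b * c ^+ k.
    set y := `|p`_j| / b.
    have y0 : 0 <= y by rewrite divr_ge0 // ltW.
    have hpc : powR y (k%:R^-1) <= c.
      have := @bigmax0_ge R _ (index_enum 'I_m)
        (fun i : 'I_m => powR (`|p`_(m - i.+1)| / bcoef p m r) ((i.+1)%:R)^-1)
        (Ordinal hi) (mem_index_enum _).
      by rewrite /= hmi prednK.
    have ey : y = (powR y k%:R^-1) ^+ k.
      rewrite -powR_mulrn ?powR_ge0 // -powRrM mulVf ?powRr1 //.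
      by rewrite pnatr_eq0 -lt0n.
    have : y <= c ^+ k.
      by rewrite ey; apply: lerXn2r; rewrite ?nnegrE ?powR_ge0.
    by rewrite /y ler_pdivrMr // mulrC.
  have hxk : c ^+ k * x ^+ j <= x ^+ m * 2^-1 ^+ k.
    rewrite -hjk exprD mulrAC; apply: ler_wpM2r; first by apply: exprn_ge0; apply: ltW.
    rewrite -exprMn; apply: lerXn2r; rewrite ?nnegrE //.
      by rewrite mulr_ge0 // ltW.
    by rewrite ler_pdivlMr //; rewrite mulrC ltW.
  apply: (@le_trans _ _ (`|p`_j| * x ^+ j)).
    rewrite -normrN -mulNr; apply: ler_wpM2r; last exact: ler_norm.
    by apply: exprn_ge0; apply: ltW.
  apply: (@le_trans _ _ (b * c ^+ k * x ^+ j)).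
    apply: ler_wpM2r; first by apply: exprn_ge0; apply: ltW.
    by [].
  rewrite -!mulrA; apply: ler_wpM2l; first exact: ltW.
  by [].
have hL : - L <= b * x ^+ m * (1 - 2^-1 ^+ m).
  have -> : 1 - 2^-1 ^+ m = \sum_(j < m) (2^-1 : R) ^+ (m - j).
    by apply: (addIr (2^-1 ^+ m)); rewrite geom_half subrK.
  rewrite /L -sumrN mulr_sumr big_mkord.
  by apply: ler_sum => j _; apply: hterm.
have hm0 : 0 < b * x ^+ m * 2^-1 ^+ m.
  by rewrite !mulr_gt0 ?exprn_gt0 ?invr_gt0.
rewrite mulrBr mulr1 [b * _]mulrC in hL.
lra.
Qed.
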